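(* For every positive integer $d$ there exists $c>0$ such that the following holds. Let $G$ be the intersection graph of $n\geq 2$ open axis-parallel boxes in $\mathbb{R}^d$, and let $H$ be a comparability graph on $V(G)$. If $G\cap H$ contains no clique of size $s$, then $\chi(G\cap H)\leq c\,s(\log n)^{d}$.
   Context: An open axis-parallel box in $\mathbb{R}^d$ is a set $\{x\in\mathbb{R}^d: a_i<x_i<b_i \ \forall i\in[d]\}$. The intersection graph of a family of boxes has the boxes as vertices, two being adjacent iff they intersect. A comparability graph is a graph $H$ for which there is a partial order $\prec$ on $V(H)$ such that $\{x,y\}\in E(H)$ iff $x\prec y$ or $y\prec x$. For graphs $G,H$ on the same vertex set, $G\cap H$ is the graph on that vertex set with edge set $E(G)\cap E(H)$. $\chi$ denotes chromatic number. *)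

(* Defs.v *)
From Stdlib Require Import Reals.
From mathcomp Require Import all_boot.
Set Implicit Arguments. Unset Strict Implicit. Unset Printing Implicit Defensive.

Definition in_open_box (d : nat) (a b x : 'I_d -> R) : Prop :=
  forall i : 'I_d, Rlt (a i) (x i) /\ Rlt (x i) (b i).

Definition box_graph (d : nat) (T : finType) (a b : T -> 'I_d -> R)
  (u v : T) : Prop :=
  u <> v /\ exists x : 'I_d -> R, in_open_box (a u) (b u) x /\ in_open_box (a v) (b v) x.

Definition comparability_graph (T : finType) (H : T -> T -> Prop) : Prop :=
  exists lt : rel T, irreflexive lt /\ transitive lt /\
    forall x y, H x y <-> (lt x y || lt y x).

Definition graphI (T : Type) (G H : T -> T -> Prop) (u v : T) : Prop :=
  G u v /\ H u v.

Definition has_clique (T : finType) (G : T -> T -> Prop) (s : nat) : Prop :=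
  exists K : {set T}, #|K| = s /\
    forall u v, u \in K -> v \in K -> u != v -> G u v.

Definition colorable (T : finType) (G : T -> T -> Prop) (k : nat) : Prop :=
  exists f : T -> 'I_k, forall u v, G u v -> f u <> f v.

Definition is_chromatic_number (T : finType) (G : T -> T -> Prop) (k : nat) : Prop :=
  colorable G k /\ forall m, colorable G m -> (k <= m)%N.

(* Main.v *)
Require Import Defs.
From Stdlib Require Import Reals Lra.
From mathcomp Require Import all_boot zify.
Set Implicit Arguments. Unset Strict Implicit. Unset Printing Implicit Defensive.

Definition Rltb (x y : R) : bool := if Rlt_dec x y then true else false.
Lemma RltbP x y : reflect (Rlt x y) (Rltb x y).
Proof. rewrite /Rltb; case: Rlt_dec => h; constructor => //. Qed.

Lemma cross P lo1 hi1 lo2 hi2 x1 x2 : 0 < P -> lo1 < hi2 -> lo2 < hi1 ->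
  lo1 < x1 < hi1 -> lo2 < x2 < hi2 -> P %| x1 -> P %| x2 ->
  (forall x, lo1 < x < hi1 -> ~~ (P * 2 %| x)) ->
  (forall x, lo2 < x < hi2 -> ~~ (P * 2 %| x)) -> x1 = x2.
Proof.
have key : forall lo1 hi1 lo2 hi2 x1 x2, 0 < P -> lo1 < hi2 -> lo2 < hi1 ->
  lo1 < x1 < hi1 -> lo2 < x2 < hi2 -> P %| x1 -> P %| x2 ->
  (forall x, lo1 < x < hi1 -> ~~ (P * 2 %| x)) ->
  (forall x, lo2 < x < hi2 -> ~~ (P * 2 %| x)) -> x1 < x2 -> False.
  move=> l1 h1 l2 h2 y1 y2 P0 c1 c2 /andP[a1 b1] /andP[a2 b2] /dvdnP[j1 e1] /dvdnP[j2 e2] n1 n2 lt12; subst y1 y2.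
  have jlt : j1 < j2 by rewrite ltn_pmul2r in lt12.
  have := odd_double_half j1; set i := j1./2; case: (odd j1) => /= ej1.
  - set z := (i.+1) * (P * 2).
    have zd : P * 2 %| z by apply: dvdn_mull.
    have ez : z = j1 * P + P by rewrite /z -ej1; rewrite -mul2n; nia.
    have zle : z <= j2 * P by rewrite ez; have : j1.+1 <= j2 by []; nia.
    case: (ltngtP z (j2 * P)) => [zlt|zgt|zeq]; last first.
      2: by lia.
      by move: (n2 (j2 * P)); rewrite a2 b2 -zeq zd => /(_ isT).
    case: (ltnP z h1) => zh1.
    + have hz : l1 < z < h1 by apply/andP; split; lia.
      by move: (n1 z hz); rewrite zd.
    + have hz : l2 < z < h2 by apply/andP; split; lia.
      by move: (n2 z hz); rewrite zd.
  - move: (n1 (j1 * P)); rewrite a1 b1 => /(_ isT) /negP; apply.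
    have -> : j1 * P = i * (P * 2).
      by rewrite -ej1 /= add0n -mul2n; nia.
    exact: dvdn_mull.
move=> P0 c1 c2 i1 i2 d1 d2 n1 n2.
case: (ltngtP x1 x2) => // h.
- by case: (key lo1 hi1 lo2 hi2 x1 x2).
- by case: (key lo2 hi2 lo1 hi1 x2 x1).
Qed.

Lemma real_mid (a1 b1 a2 b2 : R) : Rlt a1 b1 -> Rlt a2 b2 -> Rlt a1 b2 -> Rlt a2 b1 ->
  let p := Rdiv (Rplus (Rmax a1 a2) (Rmin b1 b2)) 2 in
  (Rlt a1 p /\ Rlt p b1) /\ (Rlt a2 p /\ Rlt p b2).
Proof.
move=> h1 h2 h3 h4 /=; rewrite /Rmax /Rmin.
case: Rle_dec => e1; case: Rle_dec => e2; lra.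
Qed.

Lemma sub_card (T : finType) (S : {set T}) m : m <= #|S| ->
  exists K : {set T}, K \subset S /\ #|K| = m.
Proof.
elim: m => [|m IH] hm; first by exists set0; rewrite sub0set cards0.
have [K [KS cK]] := IH (ltnW hm).
have : ~~ (S \subset K).
  by apply/negP => /subset_leq_card; rewrite cK; lia.
case/subsetPn => x xS xK.
exists (x |: K); split; first by rewrite subUset sub1set xS.
by rewrite cardsU1 xK cK.
Qed.

Lemma INR_expn m k : INR (m ^ k) = pow (INR m) k.
Proof.
elim: k => [|k IH]; first by rewrite expn0.
by rewrite expnS -multE mult_INR IH.
Qed.

Section Main.
Variables (d : nat) (T : finType) (a b : T -> 'I_d -> R).
Hypothesis ab : forall v i, Rlt (a v i) (b v i).

Definition rk (i : 'I_d) (x : R) : nat :=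
  #|[set w | Rltb (a w i) x]| + #|[set w | Rltb (b w i) x]|.

Lemma rk_mono i x y : Rle x y -> rk i x <= rk i y.
Proof.
move=> le; rewrite /rk leq_add //; apply: subset_leq_card; apply/subsetP => w;
  rewrite !inE => /RltbP h; apply/RltbP; lra.
Qed.

Lemma rk_lt i x y : rk i x < rk i y -> Rlt x y.
Proof.
move=> h; case: (Rlt_le_dec x y) => // le.
by move: (rk_mono i le); rewrite leqNgt h.
Qed.

Lemma rk_a i v y : Rlt (a v i) y -> rk i (a v i) < rk i y.
Proof.
move=> lt; rewrite /rk -addSn leq_add //; last first.
  apply: subset_leq_card; apply/subsetP => w; rewrite !inE => /RltbP h; apply/RltbP; lra.
apply: proper_card; apply/properP; split.
  apply/subsetP => w; rewrite !inE => /RltbP h; apply/RltbP; lra.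
exists v; rewrite !inE; apply/RltbP => //; exact: Rlt_irrefl.
Qed.

Lemma rk_b i v y : Rlt (b v i) y -> rk i (b v i) < rk i y.
Proof.
move=> lt; rewrite /rk -addnS leq_add //.
  apply: subset_leq_card; apply/subsetP => w; rewrite !inE => /RltbP h; apply/RltbP; lra.
apply: proper_card; apply/properP; split.
  apply/subsetP => w; rewrite !inE => /RltbP h; apply/RltbP; lra.
exists v; rewrite !inE; apply/RltbP => //; exact: Rlt_irrefl.
Qed.

Lemma rk_bound i x : rk i x <= 2 * #|T|.
Proof. by rewrite /rk mul2n -addnn leq_add // max_card. Qed.

Definition A v i := 2 * rk i (a v i).
Definition B v i := 2 * rk i (b v i).

Lemma AB v i : A v i + 2 <= B v i.
Proof. have := rk_a (ab v i); rewrite /A /B; lia. Qed.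

Lemma B_le v i : B v i <= 4 * #|T|.
Proof. have := rk_bound i (b v i); rewrite /B; lia. Qed.

Definition N := 4 * #|T|.
Definition K := (trunc_log 2 N).+1.

Lemma K_big : N < 2 ^ K.
Proof. exact: trunc_log_ltn. Qed.

Definition okk lo hi k : bool := [exists x : 'I_N, (lo < x < hi) && (2 ^ k %| x)].
Definition lvl lo hi : nat := \max_(k : 'I_K | okk lo hi k) k.

Lemma lvl_lt lo hi : lvl lo hi < K.
Proof. by rewrite /lvl; elim/big_ind: _ => // x y; rewrite gtn_max => -> ->. Qed.

Lemma lvl_ok lo hi : lo + 2 <= hi -> hi <= N -> okk lo hi (lvl lo hi).
Proof.
move=> h1 h2.
have ne : 0 < #|[pred k : 'I_K | okk lo hi k]|.
  apply/card_gt0P; exists ord0; rewrite inE /okk /=.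
  have x0 : lo.+1 < N by lia.
  by apply/existsP; exists (Ordinal x0); rewrite /= expn0 dvd1n andbT; apply/andP; split; lia.
have -> : lvl lo hi = \max_(k in [pred k : 'I_K | okk lo hi k]) k.
  by apply: eq_bigl => k; rewrite inE.
have [k0 k0in ->] := eq_bigmax_cond (fun k : 'I_K => nat_of_ord k) ne.
by move: k0in; rewrite inE.
Qed.

Lemma lvl_max lo hi : hi <= N -> forall x, lo < x < hi -> ~~ (2 ^ lvl lo hi * 2 %| x).
Proof.
move=> hN x /andP[h1 h2]; rewrite -expnSr; apply/negP => dx.
case: (ltnP (lvl lo hi).+1 K) => hk.
  have : okk lo hi (Ordinal hk).
    have xN : x < N by lia.
    by apply/existsP; exists (Ordinal xN); rewrite /= h1 h2 dx.
  move/(@leq_bigmax_cond _ (fun k : 'I_K => okk lo hi k) (fun k : 'I_K => nat_of_ord k)) => /=.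
  rewrite -/(lvl lo hi); lia.
have x0 : 0 < x by lia.
have := dvdn_leq x0 dx.
have := leq_pexp2l (isT : 0 < 2) hk.
have := K_big; lia.
Qed.

Definition mpt lo hi : option 'I_N :=
  [pick x : 'I_N | (lo < x < hi) && (2 ^ lvl lo hi %| x)].

Lemma mpt_spec v i : exists x : 'I_N, mpt (A v i) (B v i) = Some x /\
  A v i < x < B v i /\ 2 ^ lvl (A v i) (B v i) %| x.
Proof.
rewrite /mpt; case: pickP => [x /andP[h1 h2]|none]; first by exists x.
have /existsP[x /andP[h1 h2]] := lvl_ok (AB v i) (B_le v i).
by move: (none x); rewrite h1 h2.
Qed.

Lemma box_AB u v : box_graph a b u v -> forall i, A u i < B v i /\ A v i < B u i.
Proof.
case=> _ [x [hu hv]] i; have [hu1 hu2] := hu i; have [hv1 hv2] := hv i.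
have h1 := rk_a (Rlt_trans _ _ _ hu1 hv2).
have h2 := rk_a (Rlt_trans _ _ _ hv1 hu2).
rewrite /A /B; lia.
Qed.

Definition lam v : {ffun 'I_d -> 'I_K} := [ffun i => Ordinal (lvl_lt (A v i) (B v i))].
Definition cls v : {ffun 'I_d -> option 'I_N} := [ffun i => mpt (A v i) (B v i)].

Lemma adj_cls u v : box_graph a b u v -> lam u = lam v -> cls u = cls v.
Proof.
move=> g el; apply/ffunP => i; rewrite !ffunE.
have /(congr1 val) /= ek : lam u i = lam v i by rewrite el.
move: ek; rewrite !ffunE /= => ek.
have [x1 [-> [i1 d1]]] := mpt_spec u i.
have [x2 [-> [i2 d2]]] := mpt_spec v i.
have [c1 c2] := box_AB g i.
congr Some; apply: val_inj => /=.
apply: (@cross (2 ^ lvl (A u i) (B u i)) (A u i) (B u i) (A v i) (B v i)) => //.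
- by rewrite expn_gt0.
- by rewrite ek.
- exact: lvl_max (B_le u i).
- by rewrite ek; exact: lvl_max (B_le v i).
Qed.

Lemma same_cls u v : u <> v -> cls u = cls v -> box_graph a b u v.
Proof.
move=> ne ec; split => //.
have pt : forall i, (Rlt (a u i) (b v i)) /\ (Rlt (a v i) (b u i)).
  move=> i; have : cls u i = cls v i by rewrite ec.
  rewrite !ffunE.
  have [x1 [-> [/andP[i1 j1] _]]] := mpt_spec u i.
  have [x2 [-> [/andP[i2 j2] _]]] := mpt_spec v i.
  case=> e; subst x2; split; apply: (@rk_lt i); move: i1 j1 i2 j2; rewrite /A /B; lia.
exists (fun i => Rdiv (Rplus (Rmax (a u i) (a v i)) (Rmin (b u i) (b v i))) 2).
split => i; have [p1 p2] := pt i; have := real_mid (ab u i) (ab v i) p1 p2; simpl; tauto.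
Qed.

End Main.

Section Heights.
Variables (d : nat) (T : finType) (a b : T -> 'I_d -> R).
Hypothesis ab : forall v i, Rlt (a v i) (b v i).
Variable lt : rel T.
Hypothesis ltirr : irreflexive lt.
Hypothesis lttr : transitive lt.
Variable H : T -> T -> Prop.
Hypothesis Hlt : forall x y, H x y <-> (lt x y || lt y x).
Variable s : nat.
Hypothesis nocl : ~ has_clique (graphI (box_graph a b) H) s.

Definition chainEnd v (S : {set T}) : bool :=
  [&& v \in S, [forall x in S, (x == v) || lt x v],
      [forall x in S, cls a b x == cls a b v] &
      [forall x in S, forall y in S, (x != y) ==> (lt x y || lt y x)]].

Definition h v := \max_(S : {set T} | chainEnd v S) #|S|.

Lemma chainEnd1 v : chainEnd v [set v].
Proof.
apply/and4P; split; first by rewrite inE.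
- by apply/forall_inP => x /set1P ->; rewrite eqxx.
- by apply/forall_inP => x /set1P ->.
- by apply/forall_inP => x /set1P ->; apply/forall_inP => y /set1P ->; rewrite eqxx.
Qed.

Lemma h_spec v : exists S, chainEnd v S /\ h v = #|S|.
Proof.
have ne : 0 < #|[pred S : {set T} | chainEnd v S]|.
  by apply/card_gt0P; exists [set v]; rewrite inE chainEnd1.
have -> : h v = \max_(S in [pred S : {set T} | chainEnd v S]) #|S|.
  by apply: eq_bigl => S; rewrite inE.
have [S0 S0in ->] := eq_bigmax_cond (fun S : {set T} => #|S|) ne.
by exists S0; move: S0in; rewrite inE.
Qed.

Lemma h_ge v S : chainEnd v S -> #|S| <= h v.
Proof.
exact: (@leq_bigmax_cond _ (fun S : {set T} => chainEnd v S) (fun S : {set T} => #|S|)).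
Qed.

Lemma h_lt v : h v < s.
Proof.
have [S [/and4P[vS _ /forall_inP cS /forall_inP pS] ->]] := h_spec v.
rewrite ltnNge; apply/negP => sle.
have [K0 [KS cK]] := sub_card sle.
apply: nocl; exists K0; split => // x y xK yK xy.
have xS := subsetP KS x xK; have yS := subsetP KS y yK.
split.
- apply: (same_cls ab); first by apply/eqP.
  by rewrite (eqP (cS x xS)) (eqP (cS y yS)).
- by apply/Hlt; move: (pS x xS) => /forall_inP /(_ y yS); rewrite xy.
Qed.

Lemma h_incr u v : u <> v -> cls a b u = cls a b v -> lt u v -> h u < h v.
Proof.
move=> ne ec luv.
have [S [cS ->]] := h_spec u.
move: (cS) => /and4P[uS /forall_inP lS /forall_inP eS /forall_inP pS].
have vS : v \notin S.
  apply/negP => vS; move: (lS v vS) => /orP[/eqP e|lvu]; first by apply: ne.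
  by move: (lttr luv lvu); rewrite ltirr.
have lv : forall x, x \in S -> lt x v.
  by move=> x xS; move: (lS x xS) => /orP[/eqP ->|lxu] //; exact: lttr lxu luv.
have : chainEnd v (v |: S).
  apply/and4P; split; first by rewrite setU11.
  - apply/forall_inP => x /setU1P[->|xS]; first by rewrite eqxx.
    by rewrite lv ?orbT.
  - apply/forall_inP => x /setU1P[->//|xS]; by rewrite (eqP (eS x xS)) ec.
  - apply/forall_inP => x /setU1P[->|xS]; apply/forall_inP => y /setU1P[->|yS].
    + by rewrite eqxx.
    + by rewrite (lv y yS) orbT implybT.
    + by rewrite (lv x xS) implybT.
    + by move: (pS x xS) => /forall_inP /(_ y yS).
move/h_ge; rewrite cardsU1 vS.
done.
Qed.

End Heights.


Open Scope R_scope.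
Lemma final_nra k l2 ln : INR k * l2 <= INR 4 * ln -> 0 <= INR k -> / 2 < l2 -> INR k <= 8 * ln.
Proof. move=> h1 h2 h3; have e : INR 4 = 4 by simpl; lra. rewrite e in h1; nra. Qed.
Lemma final_R (chi k s d : nat) L : INR chi <= INR k ^ d * INR s -> INR k <= 8 * L ->
  INR chi <= 8 ^ d * INR s * L ^ d.
Proof.
move=> h1 h2.
have h3 : INR k ^ d <= (8 * L) ^ d by apply: pow_incr; split => //; exact: pos_INR.
rewrite Rpow_mult_distr in h3.
have h4 := Rmult_le_compat_r (INR s) _ _ (pos_INR s) h3.
apply: (Rle_trans _ _ _ h1); apply: (Rle_trans _ _ _ h4); right; ring.
Qed.
Close Scope R_scope.

Lemma K_bound (T : finType) : (2 <= #|T|)%N -> Rle (INR (K T)) (Rmult 8 (ln (INR #|T|))).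
Proof.
move=> n2; set n := #|T|.
have t1 : 2 ^ trunc_log 2 (4 * n) <= 4 * n by apply: trunc_logP => //; lia.
have e4 : n ^ 4 = n * n * n * n by rewrite !expnS expn0; lia.
have hn : 2 ^ K T <= n ^ 4.
  have q1 : 4 <= n * n by nia.
  have q2 : 8 <= n * n * n by nia.
  have q3 : 8 * n <= n * n * n * n by nia.
  rewrite /K /N expnS e4 -/n; lia.
have hR : Rle (pow 2 (K T)) (pow (INR n) 4).
  by rewrite -(INR_expn n 4) -(INR_expn 2 (K T)); apply: le_INR; apply/leP.
have npos : Rlt 0 (INR n) by apply: lt_0_INR; apply/ltP; lia.
have hl : Rle (ln (pow 2 (K T))) (ln (pow (INR n) 4)).
  case: (Rle_lt_or_eq_dec _ _ hR) => [lt|->]; last exact: Rle_refl.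
  apply: Rlt_le; apply: ln_increasing => //; apply: pow_lt; lra.
rewrite !ln_pow // in hl; last lra.
have := ln_lt_2; have := pos_INR (K T).
exact: final_nra.
Qed.

Theorem lemma3p2 :
  forall d : nat, (0 < d)%N ->
  exists c : R, Rlt 0 c /\
    forall (T : finType) (a b : T -> 'I_d -> R),
      (forall (v : T) (i : 'I_d), Rlt (a v i) (b v i)) ->
      (2 <= #|T|)%N ->
      forall H : T -> T -> Prop, comparability_graph H ->
      forall s : nat, ~ has_clique (graphI (box_graph a b) H) s ->
      forall chi : nat, is_chromatic_number (graphI (box_graph a b) H) chi ->
        Rle (INR chi) (Rmult (Rmult c (INR s)) (pow (ln (INR #|T|)) d)).
Proof.
move=> d _; exists (pow 8 d); split; first by apply: pow_lt; lra.
move=> T a b ab n2 H [lt [irr [tr Hlt]]] s nocl chi [_ chimin].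
pose f (v : T) : {ffun 'I_d -> 'I_(K T)} * 'I_s := (lam a b v, Ordinal (h_lt ab Hlt nocl v)).
have col : colorable (graphI (box_graph a b) H) #|{: {ffun 'I_d -> 'I_(K T)} * 'I_s}|.
  exists (fun v => enum_rank (f v)) => u v [g hh] /enum_rank_inj [el eh].
  have ec := adj_cls ab g el.
  have ne : u <> v by case: g.
  move/Hlt: hh => /orP[l|l].
  - by have := h_incr irr tr ne ec l; rewrite eh ltnn.
  - have ne' : v <> u by move=> e; apply: ne.
    by have := h_incr irr tr ne' (esym ec) l; rewrite eh ltnn.
have := chimin _ col; rewrite card_prod card_ffun !card_ord => hc.
apply: final_R; last exact: K_bound.
rewrite -INR_expn -mult_INR multE; apply: le_INR; exact/leP.
Qed.
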